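(* Let $M$ be a $\mathtt{dBang}$ term. If $M$ is meaningful, then $\mathrm{nf}(\mathcal T(M))\neq\emptyset$.
   Context: \textbf{dBang.} Terms: $M,N ::= x \mid \lambda x.M \mid MN \mid M[N/x] \mid\ !M \mid \mathrm{der}\,M$ ($M[N/x]$ explicit substitution binding $x$); $M\{N/x\}$ capture-avoiding substitution. List contexts $L ::= \square\mid L[N/x]$. Root rules: $L\langle\lambda x.M\rangle N \mapsto L\langle M[N/x]\rangle$; $M[L\langle !N\rangle/x]\mapsto L\langle M\{N/x\}\rangle$; $\mathrm{der}(L\langle !N\rangle)\mapsto L\langle N\rangle$. Surface contexts $S ::= \square\mid\lambda x.S\mid SM\mid MS\mid S[M/x]\mid M[S/x]\mid\mathrm{der}\,S$; $\to_S$ is the closure of the root rules under surface contexts. Testing contexts: $T ::= \square\mid T N\mid(\lambda x.T)N$. $M$ is meaningful if there exist a testing context $T$ and a term $P$ with $T\langle M\rangle\to_S^* !P$. \textbf{Resources and Taylor expansion.} Resource terms: $m,n ::= x\mid\lambda x.m\mid mn\mid m[n/x]\mid\mathrm{der}\,m\mid[m_1,\dots,m_k]$ ($k\ge0$ multisets). Resource list contexts $l::=\square\mid l[n/x]$. Resource reduction (target a resource term or the zero symbol $\emptyset$), closed under all contexts: $\mathrm{der}(l\langle[m]\rangle)\to l\langle m\rangle$; $\mathrm{der}(l\langle[m_1,\dots,m_k]\rangle)\to\emptyset$ if $k\ne1$; $l\langle\lambda x.m\rangle n\to l\langle m[n/x]\rangle$; $m[l\langle[n_1,\dots,n_k]\rangle/x]\to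 l\langle m\{n_{\sigma(1)}/x_1,\dots,n_{\sigma(k)}/x_k\}\rangle$ for every permutation $\sigma$ when $x_1,\dots,x_k$ are exactly the free occurrences of $x$ in $m$, and $\to\emptyset$ otherwise. Approximation: $x\sqsubset x$; $\lambda x.m\sqsubset\lambda x.M$ if $m\sqsubset M$; $mn\sqsubset MN$ and $m[n/x]\sqsubset M[N/x]$ if $m\sqsubset M,n\sqsubset N$; $\mathrm{der}\,m\sqsubset\mathrm{der}\,M$ if $m\sqsubset M$; $[m_1,\dots,m_k]\sqsubset\ !M$ for any $k\ge0$ if every $m_i\sqsubset M$. $\mathcal T(M)=\{m\mid m\sqsubset M\}$; $\mathrm{nf}(\mathcal T(M))$ is the set of normal resource terms $p$ with $m\to^*p$ for some $m\in\mathcal T(M)$. *)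

(* Defs.v *)
(* Variables are de Bruijn indices; a binder (lambda, explicit substitution)
   binds index 0 in its body. *)
From Stdlib Require Import List Arith Relations Permutation.
Import ListNotations.

(* Es M N  represents  M[N/x]  (x = index 0 bound in M).               *)
Inductive term : Type :=
| Var : nat -> term
| Lam : term -> term
| App : term -> term -> term
| Es  : term -> term -> term
| Bang : term -> term
| Der : term -> term.

Fixpoint lift (c k : nat) (M : term) : term :=
  match M with
  | Var i => Var (if i <? c then i else i + k)
  | Lam M => Lam (lift (S c) k M)
  | App M N => App (lift c k M) (lift c k N)
  | Es M N => Es (lift (S c) k M) (lift c k N)
  | Bang M => Bang (lift c k M)
  | Der M => Der (lift c k M)
  end.

(* subst d N M : capture-avoiding substitution M{N/x} where x is the
   index d (at depth d); the binder of x is removed (indices > d decrease). *)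
Fixpoint subst (d : nat) (N : term) (M : term) : term :=
  match M with
  | Var i => if i =? d then lift 0 d N else if d <? i then Var (i - 1) else Var i
  | Lam M => Lam (subst (S d) N M)
  | App M1 M2 => App (subst d N M1) (subst d N M2)
  | Es M1 M2 => Es (subst (S d) N M1) (subst d N M2)
  | Bang M => Bang (subst d N M)
  | Der M => Der (subst d N M)
  end.

Definition up (f : nat -> nat) (i : nat) : nat :=
  match i with 0 => 0 | S j => S (f j) end.

Fixpoint rename (f : nat -> nat) (M : term) : term :=
  match M with
  | Var i => Var (f i)
  | Lam M => Lam (rename (up f) M)
  | App M N => App (rename f M) (rename f N)
  | Es M N => Es (rename (up f) M) (rename f N)
  | Bang M => Bang (rename f M)
  | Der M => Der (rename f M)
  end.

(* List contexts  L ::= [] | L[N/x].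
   plugL [N1; ...; Nk] M = (...(M[Nk/xk])...)[N1/x1]  (head = outermost). *)
Fixpoint plugL (L : list term) (M : term) : term :=
  match L with
  | [] => M
  | N :: L' => Es (plugL L' M) N
  end.

Inductive root : term -> term -> Prop :=
| root_dB (L : list term) (M N : term) :
    root (App (plugL L (Lam M)) N) (plugL L (Es M (lift 0 (length L) N)))
| root_sbang (L : list term) (M N : term) :
    root (Es M (plugL L (Bang N))) (plugL L (subst 0 N (lift 1 (length L) M)))
| root_dbang (L : list term) (N : term) :
    root (Der (plugL L (Bang N))) (plugL L N).

Inductive sstep : term -> term -> Prop :=
| ss_root M M' : root M M' -> sstep M M'
| ss_lam M M' : sstep M M' -> sstep (Lam M) (Lam M')
| ss_appl M M' N : sstep M M' -> sstep (App M N) (App M' N)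
| ss_appr M N N' : sstep N N' -> sstep (App M N) (App M N')
| ss_esl M M' N : sstep M M' -> sstep (Es M N) (Es M' N)
| ss_esr M N N' : sstep N N' -> sstep (Es M N) (Es M N')
| ss_der M M' : sstep M M' -> sstep (Der M) (Der M').

Definition ssteps : term -> term -> Prop := clos_refl_trans_1n term sstep.

(* Plugging is the usual (capturing) context plugging of the named syntax:
   in (\x.T) N the binder may capture a free variable of the plugged term.
   In de Bruijn form the binder of TLamApp x T N captures the free index x
   of the plugged term (cap x renames x to 0 and shifts the other free
   indices by one); choosing an index not free in the plugged term
   corresponds to a binder that captures nothing. *)
Inductive tctx : Type :=
| THole : tctx
| TApp : tctx -> term -> tctx
| TLamApp : nat -> tctx -> term -> tctx.

Definition cap (x : nat) : term -> term :=
  rename (fun i => if i =? x then 0 else S i).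

Fixpoint plugT (T : tctx) (M : term) : term :=
  match T with
  | THole => M
  | TApp T N => App (plugT T M) N
  | TLamApp x T N => App (Lam (plugT T (cap x M))) N
  end.

Definition meaningful (M : term) : Prop :=
  exists (T : tctx) (P : term), ssteps (plugT T M) (Bang P).

(* Multisets are represented by lists; all notions below are invariant
   under permutation of bags (approximation ranges over all lists, and the
   substitution rule ranges over all permutations). *)
Inductive rterm : Type :=
| RVar : nat -> rterm
| RLam : rterm -> rterm
| RApp : rterm -> rterm -> rterm
| RES  : rterm -> rterm -> rterm
| RDer : rterm -> rterm
| RBag : list rterm -> rterm.

Fixpoint rlift (c k : nat) (m : rterm) : rterm :=
  match m with
  | RVar i => RVar (if i <? c then i else i + k)
  | RLam m => RLam (rlift (S c) k m)
  | RApp m n => RApp (rlift c k m) (rlift c k n)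
  | RES m n => RES (rlift (S c) k m) (rlift c k n)
  | RDer m => RDer (rlift c k m)
  | RBag ms => RBag (map (rlift c k) ms)
  end.

Fixpoint occ (d : nat) (m : rterm) : nat :=
  match m with
  | RVar i => if i =? d then 1 else 0
  | RLam m => occ (S d) m
  | RApp m n => occ d m + occ d n
  | RES m n => occ (S d) m + occ d n
  | RDer m => occ d m
  | RBag ms => list_sum (map (occ d) ms)
  end.

(* Linear substitution m{n1/x1,...,nk/xk}: the occurrences of index d in m,
   taken left to right, are replaced by the successive elements of ns;
   the binder of x is removed.  Returns the result and the unused list. *)
Fixpoint lsub (d : nat) (m : rterm) (ns : list rterm) : rterm * list rterm :=
  match m with
  | RVar i =>
      if i =? d then
        match ns with
        | n :: ns' => (rlift 0 d n, ns')
        | [] => (RVar i, [])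
        end
      else if d <? i then (RVar (i - 1), ns) else (RVar i, ns)
  | RLam m => let (m', ns') := lsub (S d) m ns in (RLam m', ns')
  | RApp m n =>
      let (m', ns1) := lsub d m ns in
      let (n', ns2) := lsub d n ns1 in (RApp m' n', ns2)
  | RES m n =>
      let (m', ns1) := lsub (S d) m ns in
      let (n', ns2) := lsub d n ns1 in (RES m' n', ns2)
  | RDer m => let (m', ns') := lsub d m ns in (RDer m', ns')
  | RBag ms =>
      let fix go (ms : list rterm) (ns : list rterm) : list rterm * list rterm :=
        match ms with
        | [] => ([], ns)
        | m :: ms' =>
            let (m', ns1) := lsub d m ns in
            let (ms'', ns2) := go ms' ns1 in (m' :: ms'', ns2)
        end in
      let (ms', ns') := go ms ns in (RBag ms', ns')
  end.

Fixpoint rplugL (l : list rterm) (m : rterm) : rterm :=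
  match l with
  | [] => m
  | n :: l' => RES (rplugL l' m) n
  end.

(* Resource reduction; target is a resource term (Some) or zero (None).
   Closed under all contexts (zero in a context is zero). *)
Inductive rstep : rterm -> option rterm -> Prop :=
| r_der1 (l : list rterm) (m : rterm) :
    rstep (RDer (rplugL l (RBag [m]))) (Some (rplugL l m))
| r_der0 (l : list rterm) (ms : list rterm) :
    length ms <> 1 -> rstep (RDer (rplugL l (RBag ms))) None
| r_beta (l : list rterm) (m n : rterm) :
    rstep (RApp (rplugL l (RLam m)) n)
          (Some (rplugL l (RES m (rlift 0 (length l) n))))
| r_subst (l : list rterm) (m : rterm) (ns ns' : list rterm) :
    occ 0 m = length ns -> Permutation ns ns' ->
    rstep (RES m (rplugL l (RBag ns)))
          (Some (rplugL l (fst (lsub 0 (rlift 1 (length l) m) ns'))))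
| r_subst0 (l : list rterm) (m : rterm) (ns : list rterm) :
    occ 0 m <> length ns ->
    rstep (RES m (rplugL l (RBag ns))) None
| r_lam m o : rstep m o -> rstep (RLam m) (option_map RLam o)
| r_appl m o n : rstep m o -> rstep (RApp m n) (option_map (fun m' => RApp m' n) o)
| r_appr m n o : rstep n o -> rstep (RApp m n) (option_map (fun n' => RApp m n') o)
| r_esl m o n : rstep m o -> rstep (RES m n) (option_map (fun m' => RES m' n) o)
| r_esr m n o : rstep n o -> rstep (RES m n) (option_map (fun n' => RES m n') o)
| r_der m o : rstep m o -> rstep (RDer m) (option_map RDer o)
| r_bag ms1 m ms2 o : rstep m o ->
    rstep (RBag (ms1 ++ m :: ms2)) (option_map (fun m' => RBag (ms1 ++ m' :: ms2)) o).

Definition rsteps : rterm -> rterm -> Prop :=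
  clos_refl_trans_1n rterm (fun m n => rstep m (Some n)).

Definition rnormal (p : rterm) : Prop := forall o, ~ rstep p o.

Inductive approx : rterm -> term -> Prop :=
| ap_var i : approx (RVar i) (Var i)
| ap_lam m M : approx m M -> approx (RLam m) (Lam M)
| ap_app m n M N : approx m M -> approx n N -> approx (RApp m n) (App M N)
| ap_es m n M N : approx m M -> approx n N -> approx (RES m n) (Es M N)
| ap_der m M : approx m M -> approx (RDer m) (Der M)
| ap_bag ms M : Forall (fun m => approx m M) ms -> approx (RBag ms) (Bang M).

Definition taylor (M : term) : rterm -> Prop := fun m => approx m M.

Definition nf_taylor (M : term) : rterm -> Prop :=
  fun p => rnormal p /\ exists m, taylor M m /\ rsteps m p.

(* Main.v *)
Require Import Defs.
From Stdlib Require Import List Arith Lia Relations Permutation Classical.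
Import ListNotations.

Definition upS (s : nat -> term) (i : nat) : term :=
  match i with 0 => Var 0 | S j => lift 0 1 (s j) end.

Fixpoint psub (s : nat -> term) (M : term) : term :=
  match M with
  | Var i => s i
  | Lam M => Lam (psub (upS s) M)
  | App M N => App (psub s M) (psub s N)
  | Es M N => Es (psub (upS s) M) (psub s N)
  | Bang M => Bang (psub s M)
  | Der M => Der (psub s M)
  end.

Lemma up_ext f g : (forall i, f i = g i) -> forall i, up f i = up g i.
Proof. intros H [|i]; simpl; auto. Qed.

Lemma rename_ext M : forall f g, (forall i, f i = g i) -> rename f M = rename g M.
Proof.
  induction M; intros f g H; simpl; f_equal; auto using up_ext.
Qed.

Lemma rename_comp M : forall f g, rename f (rename g M) = rename (fun i => f (g i)) M.
Proof.
  induction M; intros f g; simpl; f_equal; auto;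
  try (rewrite IHM || rewrite IHM1); try apply rename_ext; try intros [|i]; auto.
Qed.

Ltac nat_cases :=
  repeat match goal with
  | |- context [?a <? ?b] => destruct (Nat.ltb_spec a b)
  | |- context [?a =? ?b] => destruct (Nat.eqb_spec a b)
  end; try (exfalso; lia); try reflexivity; try (f_equal; lia).

Definition liftf (c k i : nat) : nat := if i <? c then i else i + k.

Lemma lift_rename M : forall c k, lift c k M = rename (liftf c k) M.
Proof.
  induction M; intros c k; simpl; f_equal; auto;
  try (rewrite IHM || rewrite IHM1); try apply rename_ext; try intros [|i]; unfold liftf; simpl; auto.
  all: nat_cases.
Qed.

Lemma upS_ext f g : (forall i, f i = g i) -> forall i, upS f i = upS g i.
Proof. intros H [|i]; simpl; auto. rewrite H; auto. Qed.

Lemma psub_ext M : forall f g, (forall i, f i = g i) -> psub f M = psub g M.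
Proof.
  induction M; intros f g H; simpl; f_equal; auto using upS_ext.
Qed.

Lemma psub_rename M : forall s f, psub s (rename f M) = psub (fun i => s (f i)) M.
Proof.
  induction M; intros s f; simpl; f_equal; auto;
  try (rewrite IHM || rewrite IHM1); apply psub_ext; intros [|i]; simpl; auto.
Qed.

Lemma lift01 M : lift 0 1 M = rename S M.
Proof. rewrite lift_rename. apply rename_ext. intros i; unfold liftf; simpl; lia. Qed.

Lemma rename_psub M : forall s f, rename f (psub s M) = psub (fun i => rename f (s i)) M.
Proof.
  induction M; intros s f; simpl; f_equal; auto;
  try (rewrite IHM || rewrite IHM1); apply psub_ext; intros [|i]; simpl; auto.
  all: rewrite !lift01, !rename_comp; apply rename_ext; intros; reflexivity.
Qed.

Lemma psub_psub M : forall s t, psub t (psub s M) = psub (fun i => psub t (s i)) M.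
Proof.
  induction M; intros s t; simpl; f_equal; auto;
  try (rewrite IHM || rewrite IHM1); apply psub_ext; intros [|i]; simpl; auto.
  all: rewrite !lift01, psub_rename, rename_psub; apply psub_ext; intros j; simpl;
       rewrite lift01; reflexivity.
Qed.

Lemma rename_as_psub M : forall f, rename f M = psub (fun i => Var (f i)) M.
Proof.
  induction M; intros f; simpl; f_equal; auto;
  try (rewrite IHM || rewrite IHM1); apply psub_ext; intros [|i]; simpl; auto.
  all: nat_cases.
Qed.

Lemma psub_var M : psub Var M = M.
Proof.
  rewrite <- (rename_as_psub M id) at 1.
  - clear. induction M; simpl; f_equal; auto;
    try (rewrite <- IHM at 2 || rewrite <- IHM1 at 2); apply rename_ext; intros [|i]; auto.
Qed.

Lemma lift_psub M c k : lift c k M = psub (fun i => Var (liftf c k i)) M.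
Proof. rewrite lift_rename, rename_as_psub; reflexivity. Qed.

Definition substf (d : nat) (N : term) (i : nat) : term :=
  if i =? d then lift 0 d N else if d <? i then Var (i - 1) else Var i.

Lemma lift_lift0 N a b : lift 0 a (lift 0 b N) = lift 0 (a + b) N.
Proof.
  rewrite !lift_rename, rename_comp. apply rename_ext. intros i; unfold liftf; simpl; lia.
Qed.

Lemma lift00 N : lift 0 0 N = N.
Proof. rewrite lift_psub. rewrite <- (psub_var N) at 2. apply psub_ext.
  intros i; unfold liftf; simpl; f_equal; lia. Qed.

Lemma subst_psub M : forall d N, subst d N M = psub (substf d N) M.
Proof.
  induction M; intros d N; simpl; f_equal; auto;
  try (rewrite IHM || rewrite IHM1); apply psub_ext; intros [|i]; unfold substf; simpl; auto.
  all: nat_cases; try (rewrite lift_lift0; reflexivity); simpl; nat_cases.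
Qed.

Fixpoint upSn (k : nat) (s : nat -> term) : nat -> term :=
  match k with 0 => s | S k => upSn k (upS s) end.

Fixpoint psubL (s : nat -> term) (L : list term) : list term :=
  match L with [] => [] | N :: L => psub s N :: psubL (upS s) L end.

Lemma psubL_length L : forall s, length (psubL s L) = length L.
Proof. induction L; intros; simpl; auto. Qed.

Lemma psub_plugL L : forall s X,
  psub s (plugL L X) = plugL (psubL s L) (psub (upSn (length L) s) X).
Proof. induction L; intros; simpl; auto. rewrite IHL. reflexivity. Qed.

Lemma plugL_app L1 : forall L2 X, plugL (L1 ++ L2) X = plugL L1 (plugL L2 X).
Proof. induction L1; intros; simpl; auto. rewrite IHL1; auto. Qed.

Lemma upSn_ge k : forall s i, upSn k s (k + i) = lift 0 k (s i).
Proof.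
  induction k; intros s i; simpl.
  - rewrite lift00; auto.
  - rewrite <- Nat.add_succ_r, IHk. simpl. rewrite lift_lift0. f_equal. lia.
Qed.

Lemma upSn_lt k : forall s i, i < k -> upSn k s i = Var i.
Proof.
  induction k; intros s i H; simpl; [lia|].
  destruct (Nat.eq_dec i k).
  - subst. replace k with (k + 0) at 2 by lia. rewrite upSn_ge. simpl.
    f_equal; nat_cases.
  - apply IHk; lia.
Qed.

Lemma G1 t u n n' N : (forall i, t (n + i) = lift 0 n' (u i)) ->
  psub t (lift 0 n N) = lift 0 n' (psub u N).
Proof.
  intros H. rewrite !lift_psub, !psub_psub. apply psub_ext. intros i.
  simpl. unfold liftf. simpl. rewrite Nat.add_comm, H, lift_psub. reflexivity.
Qed.

Lemma G2 t u n n' N M : (forall i, t (n + i) = lift 0 n' (u i)) ->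
  psub t (subst 0 N (lift 1 n M)) = subst 0 (psub t N) (lift 1 n' (psub (upS u) M)).
Proof.
  intros H. rewrite !lift_psub, !subst_psub, !psub_psub. apply psub_ext. intros [|j].
  - simpl. unfold substf, liftf. simpl. rewrite !lift00. reflexivity.
  - simpl. unfold substf at 1, liftf at 1. simpl.
    replace (j + n - 0) with (n + j) by lia. rewrite H.
    rewrite lift01, psub_rename, lift_psub. apply psub_ext. intros x.
    unfold liftf. nat_cases.
Qed.

Lemma plugL_sstep L : forall Y Y', sstep Y Y' -> sstep (plugL L Y) (plugL L Y').
Proof. induction L; intros; simpl; auto. apply ss_esl; auto. Qed.

Lemma sstep_psub A B : sstep A B -> forall s, sstep (psub s A) (psub s B).
Proof.
  induction 1; intros s; simpl; try (constructor; auto; fail).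
  destruct H.
  - simpl. rewrite !psub_plugL. simpl.
    rewrite (G1 (upSn (length L) s) s (length L) (length L)) by apply upSn_ge.
    pose proof (root_dB (psubL s L) (psub (upS (upSn (length L) s)) M) (psub s N)) as H.
    rewrite psubL_length in H. constructor. exact H.
  - simpl. rewrite !psub_plugL. simpl.
    rewrite (G2 (upSn (length L) s) s (length L) (length L)) by apply upSn_ge.
    pose proof (root_sbang (psubL s L) (psub (upS s) M) (psub (upSn (length L) s) N)) as H.
    rewrite psubL_length in H. constructor. exact H.
  - simpl. rewrite !psub_plugL. simpl. constructor.
    exact (root_dbang (psubL s L) _).
Qed.

Lemma Lstep_inv L : forall X u, sstep (plugL L X) u ->
  (exists X', sstep X X' /\ u = plugL L X') \/
  (exists L' s, u = plugL L' (psub s X) /\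
     (forall Y, sstep (plugL L Y) (plugL L' (psub s Y))) /\
     (forall i, s (length L + i) = Var (length L' + i))).
Proof.
  induction L as [|A L0 IH]; intros X u H; simpl in *.
  - left. eauto.
  - inversion H; subst.
    + inversion H0; subst. right.
      set (k := length L).
      set (tau := fun i => psub (substf 0 N) (Var (liftf 1 k i))).
      assert (eqn : forall Y, subst 0 N (lift 1 k (plugL L0 Y)) =
                         plugL (psubL tau L0) (psub (upSn (length L0) tau) Y)).
      { intros Y. rewrite lift_psub, subst_psub, psub_psub, psub_plugL. reflexivity. }
      exists (L ++ psubL tau L0), (upSn (length L0) tau). split; [|split].
      * rewrite plugL_app, <- eqn. reflexivity.
      * intros Y. rewrite plugL_app, <- eqn. constructor. apply root_sbang.
      * intros i. rewrite length_app, psubL_length.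
        replace (S (length L0 + i)) with (length L0 + S i) by lia.
        rewrite upSn_ge. unfold tau. simpl. unfold substf, liftf. simpl.
        nat_cases.
    + destruct (IH X M' H3) as [[X' [HX ->]] | [L' [s [-> [HY Hs]]]]].
      * left. exists X'. split; auto.
      * right. exists (A :: L'), s. split; [reflexivity|split].
        -- intros Y. simpl. apply ss_esl. auto.
        -- intros i. simpl. replace (S (length L0 + i)) with (length L0 + S i) by lia.
           rewrite Hs. f_equal. lia.
    + right. exists (N' :: L0), Var. split; [|split].
      * simpl. rewrite psub_var. reflexivity.
      * intros Y. simpl. rewrite psub_var. apply ss_esr. auto.
      * intros i. reflexivity.
Qed.

Definition notEs (X : term) : Prop := match X with Es _ _ => False | _ => True end.

Lemma plugL_inj L : forall L' X X', notEs X -> notEs X' ->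
  plugL L X = plugL L' X' -> L = L' /\ X = X'.
Proof.
  induction L as [|A L IH]; intros [|A' L'] X X' H1 H2 E; simpl in *.
  - auto.
  - subst. simpl in H1. contradiction.
  - subst. simpl in H2. contradiction.
  - injection E as E1 E2. destruct (IH L' X X' H1 H2 E1). subst. auto.
Qed.

Lemma root_det t u1 u2 : root t u1 -> root t u2 -> u1 = u2.
Proof.
  intros H1 H2; destruct H1; inversion H2; subst;
  match goal with H : plugL _ _ = plugL _ _ |- _ =>
    apply plugL_inj in H; [destruct H as [? HH]; subst; try injection HH as ?; subst| simpl; auto | simpl; auto] end;
  reflexivity.
Qed.

Lemma lift0_var N n : lift 0 n N = psub (fun i => Var (n + i)) N.
Proof. rewrite lift_psub. apply psub_ext. intros i. unfold liftf. simpl. f_equal. lia. Qed.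

Lemma G1' s n n' N : (forall i, s (n + i) = Var (n' + i)) -> psub s (lift 0 n N) = lift 0 n' N.
Proof.
  intros H. rewrite (G1 s Var n n'), psub_var; auto.
  intros i. rewrite H. simpl. f_equal. lia.
Qed.

Lemma G2' s n n' N M : (forall i, s (n + i) = Var (n' + i)) ->
  psub s (subst 0 N (lift 1 n M)) = subst 0 (psub s N) (lift 1 n' M).
Proof.
  intros H. rewrite (G2 s Var n n').
  - f_equal. f_equal. rewrite <- (psub_var M) at 2. apply psub_ext. intros [|i]; simpl; nat_cases.
  - intros i. rewrite H. simpl. f_equal. lia.
Qed.

Lemma bang_nostep N u : ~ sstep (Bang N) u.
Proof. intros H. inversion H; subst. inversion H0. Qed.

Lemma root_diamond t u1 u2 : root t u1 -> sstep t u2 ->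
  u1 = u2 \/ exists w, sstep u1 w /\ sstep u2 w.
Proof.
  intros H1 H2. destruct H1.
  - inversion H2; subst.
    + left. eapply root_det; [apply root_dB | eauto].
    + destruct (Lstep_inv _ _ _ H3) as [[X' [HX ->]] | [L' [s [-> [HY Hs]]]]].
      * inversion HX as [a b Hr | a M1 HM | | | | | ]; subst; [inversion Hr|].
        right. exists (plugL L (Es M1 (lift 0 (length L) N))). split.
        -- apply plugL_sstep, ss_esl; auto.
        -- constructor. apply root_dB.
      * right. exists (plugL L' (Es (psub (upS s) M) (lift 0 (length L') N))). split.
        -- specialize (HY (Es M (lift 0 (length L) N))). simpl in HY.
           rewrite (G1' s (length L) (length L')) in HY; auto.
        -- simpl. constructor. apply root_dB.
    + right. exists (plugL L (Es M (lift 0 (length L) N'))). split.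
      * apply plugL_sstep, ss_esr. rewrite !lift_psub. apply sstep_psub; auto.
      * constructor. apply root_dB.
  - inversion H2; subst.
    + left. eapply root_det; [apply root_sbang | eauto].
    + right. exists (plugL L (subst 0 N (lift 1 (length L) M'))). split.
      * apply plugL_sstep. rewrite !lift_psub, !subst_psub. apply sstep_psub, sstep_psub; auto.
      * constructor. apply root_sbang.
    + destruct (Lstep_inv _ _ _ H3) as [[X' [HX ->]] | [L' [s [-> [HY Hs]]]]].
      * exfalso. eapply bang_nostep; eauto.
      * right. exists (plugL L' (subst 0 (psub s N) (lift 1 (length L') M))). split.
        -- specialize (HY (subst 0 N (lift 1 (length L) M))).
           rewrite (G2' s (length L) (length L')) in HY; auto.
        -- simpl. constructor. apply root_sbang.
  - inversion H2; subst.
    + left. eapply root_det; [apply root_dbang | eauto].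
    + destruct (Lstep_inv _ _ _ H0) as [[X' [HX ->]] | [L' [s [-> [HY Hs]]]]].
      * exfalso. eapply bang_nostep; eauto.
      * right. exists (plugL L' (psub s N)). split.
        -- apply HY.
        -- simpl. constructor. apply root_dbang.
Qed.

Lemma root_diamond' t u1 u2 : root t u2 -> sstep t u1 ->
  u1 = u2 \/ exists w, sstep u1 w /\ sstep u2 w.
Proof.
  intros H1 H2. destruct (root_diamond _ _ _ H1 H2) as [E|[w [A B]]]; auto.
  right; eauto.
Qed.

Ltac cstep := first [apply ss_lam; assumption | apply ss_appl; assumption | apply ss_appr; assumption
  | apply ss_esl; assumption | apply ss_esr; assumption | apply ss_der; assumption].

Ltac rootcase := match goal with Hr : root _ _ |- _ =>
   first [ (eapply root_diamond'; [exact Hr | cstep]) | (inversion Hr; fail) ] end.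

Ltac ih IH M M' := match goal with Hx : sstep M ?v |- _ =>
  tryif unify v M' then fail else destruct (IH _ Hx) as [->|[w [A B]]] end.

Lemma diamond t u1 : sstep t u1 -> forall u2, sstep t u2 ->
  u1 = u2 \/ exists w, sstep u1 w /\ sstep u2 w.
Proof.
  induction 1; intros u2 H2.
  - eapply root_diamond; eauto.
  - inversion H2; subst; [rootcase|].
    ih IHsstep M M'; [left; reflexivity|]. right; exists (Lam w); split; cstep.
  - inversion H2; subst; [rootcase| |].
    + ih IHsstep M M'; [left; reflexivity|]. right; exists (App w N); split; cstep.
    + right; exists (App M' N'); split; cstep.
  - inversion H2; subst; [rootcase| |].
    + right; exists (App M' N'); split; cstep.
    + ih IHsstep N N'; [left; reflexivity|]. right; exists (App M w); split; cstep.
  - inversion H2; subst; [rootcase| |].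
    + ih IHsstep M M'; [left; reflexivity|]. right; exists (Es w N); split; cstep.
    + right; exists (Es M' N'); split; cstep.
  - inversion H2; subst; [rootcase| |].
    + right; exists (Es M' N'); split; cstep.
    + ih IHsstep N N'; [left; reflexivity|]. right; exists (Es M w); split; cstep.
  - inversion H2; subst; [rootcase|].
    ih IHsstep M M'; [left; reflexivity|]. right; exists (Der w); split; cstep.
Qed.

Inductive stepsN : nat -> term -> term -> Prop :=
| sN0 t : stepsN 0 t t
| sNS n t u v : sstep t u -> stepsN n u v -> stepsN (S n) t v.

Definition snormal (v : term) : Prop := forall u, ~ sstep v u.

Lemma UN n : forall t v, stepsN n t v -> snormal v ->
  forall m u, stepsN m t u -> m <= n /\ stepsN (n - m) u v.
Proof.
  induction n as [|n IH]; intros t v H Hv m u Hm.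
  - inversion H; subst. inversion Hm; subst.
    + split; auto.
    + exfalso. eapply Hv; eauto.
  - inversion H; subst. rename u0 into t1.
    inversion Hm; subst.
    + split; [lia|]. simpl. auto.
    + rename u0 into u1.
      destruct (diamond _ _ H1 _ H0) as [<- | [w [A B]]].
      * destruct (IH _ _ H2 Hv _ _ H3). split; [lia|]. simpl. auto.
      * destruct (IH _ _ H2 Hv 1 w) as [Hle Hw]. { econstructor; eauto. constructor. }
        assert (Hu1 : stepsN n u1 v).
        { destruct n; [lia|]. econstructor; eauto. simpl in Hw. replace (n - 0) with n in Hw by lia. auto. }
        destruct (IH _ _ Hu1 Hv _ _ H3). split; [lia|]. simpl. auto.
Qed.

Lemma sstep_rename A B f : sstep A B -> sstep (rename f A) (rename f B).
Proof. intros H. rewrite !rename_as_psub. apply sstep_psub; auto. Qed.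

Lemma plugT_sstep T : forall A B, sstep A B -> sstep (plugT T A) (plugT T B).
Proof.
  induction T; intros A B H; simpl; auto.
  - apply ss_appl; auto.
  - apply ss_appl, ss_lam, IHT. unfold cap. apply sstep_rename; auto.
Qed.

Lemma stepsN_plugT T n : forall A B, stepsN n A B -> stepsN n (plugT T A) (plugT T B).
Proof.
  induction n; intros A B H; inversion H; subst; econstructor; eauto using plugT_sstep.
Qed.

Lemma ssteps_snoc M M0 u : ssteps M M0 -> sstep M0 u -> ssteps M u.
Proof.
  induction 1; intros.
  - econstructor; eauto. constructor.
  - econstructor; eauto. apply IHclos_refl_trans_1n; auto.
Qed.

Lemma ssteps_stepsN t v : ssteps t v -> exists n, stepsN n t v.
Proof.
  induction 1.
  - exists 0; constructor.
  - destruct IHclos_refl_trans_1n as [n Hn]. exists (S n). econstructor; eauto.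
Qed.

Lemma meaningful_nf M : meaningful M -> exists N, ssteps M N /\ snormal N.
Proof.
  intros [T [P HP]]. apply ssteps_stepsN in HP. destruct HP as [n Hn].
  apply NNPP. intros Hno.
  assert (Hk : forall k M0, ssteps M M0 -> exists M', stepsN k M0 M').
  { induction k; intros M0 H0.
    - exists M0; constructor.
    - assert (exists u, sstep M0 u) as [u Hu].
      { apply NNPP. intros Hn0. apply Hno. exists M0. split; auto.
        intros u Hu. apply Hn0. eauto. }
      destruct (IHk u) as [M' HM']. { eapply ssteps_snoc; eauto. }
      exists M'. econstructor; eauto. }
  destruct (Hk (S n) M) as [M' HM']. { constructor. }
  apply (stepsN_plugT T) in HM'.
  destruct (UN _ _ _ Hn (fun u => bang_nostep P u) _ _ HM'). lia.
Qed.
Lemma approx_plugL_inv L : forall X b, approx b (plugL L X) ->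
  exists l x, b = rplugL l x /\ Forall2 approx l L /\ approx x X.
Proof.
  induction L as [|A L IH]; intros X b H; simpl in *.
  - exists [], b. split; [reflexivity|split; [constructor|auto]].
  - inversion H; subst. destruct (IH _ _ ltac:(eassumption)) as [l [x [-> [Hl Hx]]]].
    exists (n :: l), x. split; [reflexivity|split; [constructor; auto|auto]].
Qed.

Lemma approx_plugL l L x X : Forall2 approx l L -> approx x X -> approx (rplugL l x) (plugL L X).
Proof. induction 1; intros; simpl; auto. constructor; auto. Qed.

Lemma approx_lift_inv M : forall c k r, approx r (lift c k M) ->
  exists m, approx m M /\ r = rlift c k m /\ forall d, d < c -> occ d r = occ d m.
Proof.
  induction M; intros c k r H; simpl in H; inversion H; subst.
  - exists (RVar n). split; [constructor|split; [reflexivity|]].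
    intros d Hd. simpl. nat_cases.
  - destruct (IHM _ _ _ ltac:(eassumption)) as [m' [A [-> C]]]. exists (RLam m'). split; [constructor; auto|split; [reflexivity|]].
    intros d Hd. simpl. apply C. lia.
  - destruct (IHM1 _ _ _ ltac:(eassumption)) as [m1 [A1 [-> C1]]]. destruct (IHM2 _ _ _ ltac:(eassumption)) as [m2 [A2 [-> C2]]].
    exists (RApp m1 m2). split; [constructor; auto|split; [reflexivity|]].
    intros d Hd. simpl. rewrite C1, C2; auto.
  - destruct (IHM1 _ _ _ ltac:(eassumption)) as [m1 [A1 [-> C1]]]. destruct (IHM2 _ _ _ ltac:(eassumption)) as [m2 [A2 [-> C2]]].
    exists (RES m1 m2). split; [constructor; auto|split; [reflexivity|]].
    intros d Hd. simpl. rewrite C1, C2; auto; lia.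
  - clear H. match goal with Hf : Forall _ _ |- _ => induction Hf as [|r rs Hr Hrs IHrs] end.
    + exists (RBag []). split; [apply ap_bag; constructor|split; [reflexivity|]]. auto.
    + destruct (IHM _ _ _ Hr) as [m1 [A1 [-> C1]]].
      destruct IHrs as [mb [Ab [Eb Cb]]].
      destruct mb; try discriminate. inversion Ab; subst. simpl in Eb. injection Eb as Eb.
      exists (RBag (m1 :: l)). split; [apply ap_bag; constructor; auto|split].
      * simpl. rewrite Eb. reflexivity.
      * intros d Hd. simpl. rewrite C1; auto. specialize (Cb d Hd). simpl in Cb.
        rewrite Eb in Cb |- *. rewrite Cb. reflexivity.
  - destruct (IHM _ _ _ ltac:(eassumption)) as [m' [A [-> C]]]. exists (RDer m'). split; [constructor; auto|split; [reflexivity|]].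
    intros d Hd. simpl. apply C. auto.
Qed.

Fixpoint lsubs (d : nat) (ms ns : list rterm) : list rterm * list rterm :=
  match ms with
  | [] => ([], ns)
  | m :: ms' => let (m', ns1) := lsub d m ns in
                let (ms'', ns2) := lsubs d ms' ns1 in (m' :: ms'', ns2)
  end.

Lemma lsub_bag d ms : forall ns,
  lsub d (RBag ms) ns = let (ms', ns') := lsubs d ms ns in (RBag ms', ns').
Proof.
  induction ms as [|m ms IH]; intros ns; simpl; auto.
  destruct (lsub d m ns) as [m' ns1]. specialize (IH ns1). simpl in IH.
  destruct (lsubs d ms ns1) as [a b].
  match type of IH with match ?e with pair _ _ => _ end = _ => destruct e as [x y] end.
  injection IH as -> ->. reflexivity.
Qed.

Lemma decomp N P : forall d r, approx r (subst d N P) ->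
  exists p ns, approx p P /\ Forall (fun n => approx n N) ns /\ occ d p = length ns /\
    forall rest, lsub d p (ns ++ rest) = (r, rest).
Proof.
  induction P; intros d r H; simpl in H.
  - destruct (Nat.eqb_spec n d).
    + subst. destruct (approx_lift_inv _ _ _ _ H) as [m [Am [-> _]]].
      exists (RVar d), [m]. split; [constructor|split; [constructor; auto|split]].
      * simpl. rewrite Nat.eqb_refl. reflexivity.
      * intros rest. simpl. rewrite Nat.eqb_refl. reflexivity.
    + exists (RVar n), []. split; [constructor|split; [constructor|split]].
      * simpl. destruct (Nat.eqb_spec n d); [contradiction|reflexivity].
      * intros rest. simpl. destruct (Nat.eqb_spec n d); [contradiction|].
        destruct (Nat.ltb_spec d n); inversion H; subst; reflexivity.
  - inversion H; subst. destruct (IHP _ _ ltac:(eassumption)) as [p [ns [Ap [Ans [Oc Ls]]]]].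
    exists (RLam p), ns. split; [constructor; auto|split; [auto|split]].
    + simpl. auto.
    + intros rest. simpl. rewrite Ls. reflexivity.
  - inversion H; subst.
    destruct (IHP1 _ _ ltac:(eassumption)) as [p1 [ns1 [Ap1 [Ans1 [Oc1 Ls1]]]]].
    destruct (IHP2 _ _ ltac:(eassumption)) as [p2 [ns2 [Ap2 [Ans2 [Oc2 Ls2]]]]].
    exists (RApp p1 p2), (ns1 ++ ns2). split; [constructor; auto|split; [apply Forall_app; auto|split]].
    + simpl. rewrite length_app. lia.
    + intros rest. simpl. rewrite <- app_assoc, Ls1, Ls2. reflexivity.
  - inversion H; subst.
    destruct (IHP1 _ _ ltac:(eassumption)) as [p1 [ns1 [Ap1 [Ans1 [Oc1 Ls1]]]]].
    destruct (IHP2 _ _ ltac:(eassumption)) as [p2 [ns2 [Ap2 [Ans2 [Oc2 Ls2]]]]].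
    exists (RES p1 p2), (ns1 ++ ns2). split; [constructor; auto|split; [apply Forall_app; auto|split]].
    + simpl. rewrite length_app. lia.
    + intros rest. simpl. rewrite <- app_assoc, Ls1, Ls2. reflexivity.
  - inversion H; subst. clear H.
    match goal with Hf : Forall _ _ |- _ => induction Hf as [|r rs Hr Hrs IHrs] end.
    + exists (RBag []), []. split; [apply ap_bag; constructor|split; [constructor|split]]; auto.
    + destruct (IHP _ _ Hr) as [p1 [ns1 [Ap1 [Ans1 [Oc1 Ls1]]]]].
      destruct IHrs as [pb [nsb [Apb [Ansb [Ocb Lsb]]]]].
      destruct pb; try (inversion Apb; fail). inversion Apb; subst.
      exists (RBag (p1 :: l)), (ns1 ++ nsb). split; [apply ap_bag; constructor; auto|split; [apply Forall_app; auto|split]].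
      * simpl in *. rewrite length_app. lia.
      * intros rest. rewrite lsub_bag. simpl. rewrite <- app_assoc, Ls1.
        specialize (Lsb rest). rewrite lsub_bag in Lsb.
        destruct (lsubs d l (nsb ++ rest)) as [a b]. injection Lsb as -> ->. reflexivity.
  - inversion H; subst. destruct (IHP _ _ ltac:(eassumption)) as [p [ns [Ap [Ans [Oc Ls]]]]].
    exists (RDer p), ns. split; [constructor; auto|split; [auto|split]].
    + simpl. auto.
    + intros rest. simpl. rewrite Ls. reflexivity.
Qed.

Lemma back1 A B : sstep A B -> forall b, approx b B -> exists a, approx a A /\ rstep a (Some b).
Proof.
  induction 1; intros b Hb.
  - destruct H as [L M N|L M N|L N].
    + destruct (approx_plugL_inv _ _ _ Hb) as [l [x [-> [Hl Hx]]]].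
      inversion Hx; subst.
      destruct (approx_lift_inv _ _ _ _ ltac:(eassumption)) as [n' [An [-> _]]].
      exists (RApp (rplugL l (RLam m)) n'). split.
      * constructor; auto. apply approx_plugL; auto. constructor; auto.
      * rewrite <- (Forall2_length Hl). apply r_beta.
    + destruct (approx_plugL_inv _ _ _ Hb) as [l [x [-> [Hl Hx]]]].
      destruct (decomp _ _ _ _ Hx) as [p [ns [Ap [Ans [Oc Ls]]]]].
      destruct (approx_lift_inv _ _ _ _ Ap) as [m [Am [-> Cm]]].
      exists (RES m (rplugL l (RBag ns))). split.
      * constructor; auto. apply approx_plugL; auto. constructor; auto.
      * rewrite (Cm 0) in Oc by lia.
        pose proof (r_subst l m ns ns Oc (Permutation_refl ns)) as R.
        rewrite (Forall2_length Hl) in R. specialize (Ls []). rewrite app_nil_r in Ls.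
        rewrite Ls in R. exact R.
    + destruct (approx_plugL_inv _ _ _ Hb) as [l [x [-> [Hl Hx]]]].
      exists (RDer (rplugL l (RBag [x]))). split.
      * constructor. apply approx_plugL; auto. constructor; auto.
      * apply r_der1.
  - inversion Hb; subst. destruct (IHsstep _ ltac:(eassumption)) as [a [Aa Ra]].
    exists (RLam a). split; [constructor; auto|]. exact (r_lam _ _ Ra).
  - inversion Hb; subst. destruct (IHsstep _ ltac:(eassumption)) as [a [Aa Ra]].
    exists (RApp a n). split; [constructor; auto|]. exact (r_appl _ _ n Ra).
  - inversion Hb; subst. destruct (IHsstep _ ltac:(eassumption)) as [a [Aa Ra]].
    exists (RApp m a). split; [constructor; auto|]. exact (r_appr m _ _ Ra).
  - inversion Hb; subst. destruct (IHsstep _ ltac:(eassumption)) as [a [Aa Ra]].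
    exists (RES a n). split; [constructor; auto|]. exact (r_esl _ _ n Ra).
  - inversion Hb; subst. destruct (IHsstep _ ltac:(eassumption)) as [a [Aa Ra]].
    exists (RES m a). split; [constructor; auto|]. exact (r_esr m _ _ Ra).
  - inversion Hb; subst. destruct (IHsstep _ ltac:(eassumption)) as [a [Aa Ra]].
    exists (RDer a). split; [constructor; auto|]. exact (r_der _ _ Ra).
Qed.

Lemma back_steps A B : ssteps A B -> forall b, approx b B -> exists a, approx a A /\ rsteps a b.
Proof.
  induction 1; intros b Hb.
  - exists b. split; auto. constructor.
  - destruct (IHclos_refl_trans_1n _ Hb) as [a1 [A1 R1]].
    destruct (back1 _ _ H _ A1) as [a [Aa Ra]].
    exists a. split; auto. econstructor; eauto.
Qed.

Fixpoint m0 (M : term) : rterm :=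
  match M with
  | Var i => RVar i
  | Lam M => RLam (m0 M)
  | App M N => RApp (m0 M) (m0 N)
  | Es M N => RES (m0 M) (m0 N)
  | Bang _ => RBag []
  | Der M => RDer (m0 M)
  end.

Lemma approx_m0 M : approx (m0 M) M.
Proof. induction M; simpl; constructor; auto. Qed.

Lemma m0_plug l : forall X x, m0 X = rplugL l x -> exists L Y, X = plugL L Y /\ m0 Y = x /\ length L = length l.
Proof.
  induction l as [|a l IH]; intros X x H; simpl in H.
  - exists [], X. auto.
  - destruct X; try discriminate. simpl in H. injection H as H1 H2.
    destruct (IH _ _ H1) as [L [Y [-> [E Hl]]]].
    exists (X2 :: L), Y. simpl. auto.
Qed.

Lemma m0_redex m o : rstep m o -> forall N, m = m0 N -> exists u, sstep N u.
Proof.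
  induction 1; intros N0 E.
  - destruct N0; try discriminate. simpl in E. injection E as E.
    destruct (m0_plug _ _ _ (eq_sym E)) as [L [Y [-> [EY _]]]].
    destruct Y; discriminate.
  - destruct N0; try discriminate. simpl in E. injection E as E.
    destruct (m0_plug _ _ _ (eq_sym E)) as [L [Y [-> [EY _]]]].
    destruct Y; try discriminate. eexists. constructor. apply root_dbang.
  - destruct N0; try discriminate. simpl in E. injection E as E1 E2.
    destruct (m0_plug _ _ _ (eq_sym E1)) as [L [Y [-> [EY _]]]].
    destruct Y; try discriminate. eexists. constructor. apply root_dB.
  - destruct N0; try discriminate. simpl in E. injection E as E1 E2.
    destruct (m0_plug _ _ _ (eq_sym E2)) as [L [Y [-> [EY _]]]].
    destruct Y; try discriminate. eexists. constructor. apply root_sbang.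
  - destruct N0; try discriminate. simpl in E. injection E as E1 E2.
    destruct (m0_plug _ _ _ (eq_sym E2)) as [L [Y [-> [EY _]]]].
    destruct Y; try discriminate. eexists. constructor. apply root_sbang.
  - destruct N0; try discriminate. simpl in E. injection E as E.
    destruct (IHrstep _ E) as [u Hu]. eexists. apply ss_lam; eauto.
  - destruct N0; try discriminate. simpl in E. injection E as E1 E2.
    destruct (IHrstep _ E1) as [u Hu]. eexists. apply ss_appl; eauto.
  - destruct N0; try discriminate. simpl in E. injection E as E1 E2.
    destruct (IHrstep _ E2) as [u Hu]. eexists. apply ss_appr; eauto.
  - destruct N0; try discriminate. simpl in E. injection E as E1 E2.
    destruct (IHrstep _ E1) as [u Hu]. eexists. apply ss_esl; eauto.
  - destruct N0; try discriminate. simpl in E. injection E as E1 E2.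
    destruct (IHrstep _ E2) as [u Hu]. eexists. apply ss_esr; eauto.
  - destruct N0; try discriminate. simpl in E. injection E as E.
    destruct (IHrstep _ E) as [u Hu]. eexists. apply ss_der; eauto.
  - destruct N0; try discriminate. simpl in E. injection E as E.
    exfalso. destruct ms1; discriminate.
Qed.

Theorem mainTheorem5 (M : term) :
  meaningful M -> exists p : rterm, nf_taylor M p.
Proof.
  intros HM. destruct (meaningful_nf M HM) as [N [HMN HN]].
  destruct (back_steps M N HMN (m0 N) (approx_m0 N)) as [m [Hm Hms]].
  exists (m0 N). split.
  - intros o Ho. destruct (m0_redex _ _ Ho N eq_refl) as [u Hu]. exact (HN u Hu).
  - exists m. split; auto.
Qed.
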